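(* If $\mathscr{S}$ is a relaxed scenario, then $G_{=}(\mathscr{S})$ contains no induced cycle on $5$ vertices and no induced cycle on $\ell$ vertices for any $\ell\geq 7$. In particular, $G_{=}(\mathscr{S})$ is odd-hole free (contains no induced cycle of odd length greater than three).
   Context: All trees are planted phylogenetic trees: a tree $T$ has a distinguished vertex $0_T$ of degree $1$ whose unique neighbor $\rho_T$ is the root, and every vertex other than $0_T$ and the leaves $L(T)$ has at least two children. For $x,y\in V(T)$ write $y\preceq_T x$ if $x$ lies on the path from $0_T$ to $y$; edges are written $uv$ with $v\prec_T u$. $\mathrm{lca}_T$ denotes the last common ancestor. A time map for $T$ is $\tau_T\colon V(T)\to\mathbb{R}$ with $\tau_T(x)<\tau_T(y)$ whenever $x\prec_T y$. A relaxed scenario $\mathscr{S}=(T,S,\sigma,\mu,\tau_T,\tau_S)$ consists of a gene tree $T$ with time map $\tau_T$, a species tree $S$ with time map $\tau_S$, a map $\sigma\colon L(T)\to M$ with $M\subseteq L(S)$, and a map $\mu\colon V(T)\to V(S)\cup E(S)$ such that (S0) $\mu(x)=0_S$ iff $x=0_T$; (S1) $\mu(x)\in L(S)$ iff $x\in L(T)$, in which case $\mu(x)=\sigma(x)$; (S2) if $\mu(x)\in V(S)$ then $\tau_S(\mu(x))=\tau_T(x)$; (S3) if $\mu(x)=uv\in E(S)$ then $\tau_S(v)<\tau_T(x)<\tau_S(u)$. The EDT graph $G_{=}(\mathscr{S})$ has vertex set $L(T)$ and an edge $xy$ ($x\ne y$) iff $\tau_T(\mathrm{lca}_T(x,y))=\tau_S(\mathrm{lca}_S(\sigma(x),\sigma(y)))$.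 *)

(* Defs.v *)
From mathcomp Require Import all_boot all_order all_algebra.
Set Implicit Arguments. Unset Strict Implicit. Unset Printing Implicit Defensive.
Import Order.TTheory GRing.Theory Num.Theory.

(* A planted tree on a finite vertex type V is given by its planted vertex o
   (= 0_T) and a parent map par; par o = o by convention.  Every vertex
   reaches o by iterating par, so the graph {x, par x} (x <> o) is a tree. *)

Section Trees.
Variable V : finType.
Variables (o : V) (par : V -> V).

Definition children (x : V) : {set V} := [set y | (y != o) && (par y == x)].

Definition is_leaf (x : V) : Prop := x <> o /\ children x = set0.

(* y \preceq_T x : x lies on the path from 0_T to y *)
Definition anc (x y : V) : Prop := exists k : nat, iter k par y = x.

Definition sanc (x y : V) : Prop := anc x y /\ x <> y.

Definition planted_phylo : Prop :=
  [/\ par o = o,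
      (forall x, anc o x),
      #|children o| = 1 &
      (forall x, x <> o -> children x <> set0 -> 2 <= #|children x|)].

Definition is_lca (x y z : V) : Prop :=
  anc z x /\ anc z y /\ (forall w, anc w x -> anc w y -> anc w z).

Definition time_map (R : realDomainType) (tau : V -> R) : Prop :=
  forall x y, sanc x y -> (tau y < tau x)%R.
End Trees.

(* Relaxed scenario.  mu x = inl v means mu(x) = v in V(S);
   mu x = inr v means mu(x) is the edge (parS v) v of S (requires v <> 0_S). *)
Definition relaxed_scenario (R : realDomainType) (VT VS : finType)
  (oT : VT) (parT : VT -> VT) (oS : VS) (parS : VS -> VS)
  (sigma : VT -> VS) (mu : VT -> VS + VS) (tauT : VT -> R) (tauS : VS -> R)
  : Prop :=
  planted_phylo oT parT /\ planted_phylo oS parS /\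
  time_map parT tauT /\ time_map parS tauS /\
  (forall x, is_leaf oT parT x -> is_leaf oS parS (sigma x)) /\
  (forall x v, mu x = inr v -> v <> oS) /\
  (forall x, mu x = inl oS <-> x = oT) /\
  (forall x, (exists l, mu x = inl l /\ is_leaf oS parS l) <-> is_leaf oT parT x) /\
  (forall x, is_leaf oT parT x -> mu x = inl (sigma x)) /\
  (forall x v, mu x = inl v -> tauS v = tauT x) /\
  (forall x v, mu x = inr v -> (tauS v < tauT x)%R /\ (tauT x < tauS (parS v))%R).

Definition edt_edge (R : realDomainType) (VT VS : finType)
  (oT : VT) (parT : VT -> VT) (oS : VS) (parS : VS -> VS)
  (sigma : VT -> VS) (tauT : VT -> R) (tauS : VS -> R) (x y : VT) : Prop :=
  is_leaf oT parT x /\ is_leaf oT parT y /\ x <> y /\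
  exists zT zS, is_lca parT x y zT /\ is_lca parS (sigma x) (sigma y) zS /\
                tauT zT = tauS zS.

Definition has_induced_cycle (V : finType) (L : V -> Prop) (E : V -> V -> Prop)
  (l : nat) : Prop :=
  exists f : 'I_l -> V,
    injective f /\ (forall i, L (f i)) /\
    (forall i j, i <> j ->
       (E (f i) (f j) <-> (val j = (val i).+1 %% l \/ val i = (val j).+1 %% l))).

(* Main.v *)
Require Import Defs.
From mathcomp Require Import all_boot all_order all_algebra.
From mathcomp Require Import reals.
From mathcomp Require Import zify.
From Stdlib Require Import Classical.
Set Implicit Arguments. Unset Strict Implicit. Unset Printing Implicit Defensive.
Import Order.TTheory GRing.Theory Num.Theory.

Lemma min_ex (P : nat -> Prop) n : P n -> exists m, P m /\ forall k, k < m -> ~ P k.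
Proof.
elim: n {-2}n (leqnn n) => [|N IH] n Hn HP.
  exists n; split=> // k Hk; lia.
destruct (classic (exists k, k < n /\ P k)) as [[k [Hk Pk]]|H].
  apply: (IH k) => //; lia.
exists n; split=> // k Hk Pk; apply: H; exists k; auto.
Qed.

Section TreeFacts.
Variable V : finType.
Variables (o : V) (par : V -> V).
Hypothesis Hpo : par o = o.
Hypothesis Hall : forall x, anc par o x.

Lemma iter_o k : iter k par o = o.
Proof. by elim: k => // k IH; rewrite iterS IH Hpo. Qed.

Lemma anc_refl x : anc par x x.
Proof. by exists 0. Qed.

Lemma anc_trans x y z : anc par x y -> anc par y z -> anc par x z.
Proof. move=> [k Hk] [m Hm]; exists (k + m); by rewrite iterD Hm. Qed.

Lemma anc_antisym x y : anc par x y -> anc par y x -> x = y.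
Proof.
move=> [k Hk] [m Hm].
have Hc : forall j, iter (j * (m + k)) par y = y.
  have Hy : iter (m + k) par y = y by rewrite iterD Hk.
  elim=> // j IH; by rewrite mulSn addnC iterD Hy IH.
have [K HK] := Hall y.
case: (posnP (m + k)) => Hmk.
  have Hk0 : k = 0 by lia. by rewrite -Hk Hk0.
have : iter (K * (m + k) - K + K) par y = y.
  have -> : K * (m + k) - K + K = K * (m + k) by nia.
  exact: Hc.
rewrite iterD HK iter_o => Hy.
by rewrite -Hk -Hy iter_o.
Qed.

Lemma anc_total x y z : anc par x z -> anc par y z -> anc par x y \/ anc par y x.
Proof.
move=> [k Hk] [m Hm].
case: (leqP k m) => H.
  right; exists (m - k); by rewrite -Hk -iterD subnK.
left; exists (k - m); rewrite -Hm -iterD subnK //; lia.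
Qed.

Lemma lca_ex x y : exists z, is_lca par x y z.
Proof.
have [K HK] := Hall x.
have : anc par (iter K par x) y by rewrite HK.
move/(@min_ex (fun k => anc par (iter k par x) y)) => [m [Hm Hmin]].
exists (iter m par x); split; [by exists m|split=> //].
move=> w [j Hj] Hw.
case: (leqP m j) => H.
  exists (j - m); by rewrite -iterD subnK.
by exfalso; apply: (Hmin j H); rewrite Hj.
Qed.

Lemma lca_uniq x y z1 z2 : is_lca par x y z1 -> is_lca par x y z2 -> z1 = z2.
Proof.
move=> [A1 [B1 C1]] [A2 [B2 C2]].
apply: anc_antisym; [exact: C2 | exact: C1].
Qed.

Lemma lca_sym x y z : is_lca par x y z -> is_lca par y x z.
Proof. move=> [A [B C]]; split=> //; split=> // w H1 H2; exact: C. Qed.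

Variable R : realDomainType.
Variable tau : V -> R.
Hypothesis Htau : time_map par tau.

Lemma tau_anc u v : anc par u v -> (tau v <= tau u)%R.
Proof.
move=> H; case: (eqVneq u v) => [->|Hne] //.
apply: ltW; apply: Htau; split=> //; exact/eqP.
Qed.

Lemma lca_ultra x y w z1 z2 z3 :
  is_lca par x y z1 -> is_lca par y w z2 -> is_lca par x w z3 ->
  (tau z3 <= tau z1)%R \/ (tau z3 <= tau z2)%R.
Proof.
move=> [A1 [B1 C1]] [A2 [B2 C2]] [A3 [B3 C3]].
case: (anc_total B1 A2) => H.
- left; apply: tau_anc; apply: C3 => //; exact: anc_trans H B2.
- right; apply: tau_anc; apply: C3 => //; exact: anc_trans H A1.
Qed.

End TreeFacts.

Definition cadj (n i j : nat) : Prop :=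
  j = i.+1 \/ i = j.+1 \/ (i = 0 /\ j = n - 1) \/ (j = 0 /\ i = n - 1).

Lemma cadj_sym n i j : cadj n i j -> cadj n j i.
Proof. rewrite /cadj; lia. Qed.

Lemma cadj_irr n i : 2 <= n -> ~ cadj n i i.
Proof. rewrite /cadj; lia. Qed.

Lemma cadj_succ n k : cadj n k k.+1.
Proof. rewrite /cadj; lia. Qed.

Lemma cyc_C1 n x y z : 5 <= n -> x < n -> y < n -> z < n ->
  x <> y -> y <> z -> x <> z -> cadj n x y -> cadj n y z -> cadj n x z -> False.
Proof. rewrite /cadj; lia. Qed.

Lemma cyc_C3 n w x y z : 5 <= n -> w < n -> x < n -> y < n -> z < n ->
  x <> y -> y <> z -> x <> z -> cadj n w x -> cadj n w y -> cadj n w z -> False.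
Proof. rewrite /cadj; lia. Qed.

Lemma cyc_C2 n i j u v : 5 <= n -> i < n -> j < n -> u < n -> v < n ->
  i <> j -> u <> v -> cadj n i u -> cadj n i v -> cadj n j u -> cadj n j v -> False.
Proof. rewrite /cadj; lia. Qed.

Lemma cyc_C0 n i w : 3 <= n -> i < n -> exists p, p < n /\ cadj n i p /\ p <> w.
Proof.
move=> Hn Hi; rewrite /cadj.
have [H1|H1] : i.+1 < n \/ i = n - 1 by lia.
- case: (eqVneq w i.+1) => Hw.
  + case: (posnP i) => Hi0.
    * exists (n - 1); lia.
    * exists i.-1; lia.
  + exists i.+1; split=> //; split; [lia| apply/eqP; by rewrite eq_sym].
- case: (eqVneq w 0) => Hw.
  + exists i.-1; lia.
  + exists 0; split; [lia|split; [lia|apply/eqP; by rewrite eq_sym]].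
Qed.

Lemma cadj_mod n i j : 2 <= n -> i < n -> j < n ->
  (j = i.+1 %% n \/ i = j.+1 %% n) <-> cadj n i j.
Proof.
move=> Hn Hi Hj.
have Hm : forall k, k < n -> k.+1 %% n = if k.+1 < n then k.+1 else 0.
  move=> k Hk; case: ifP => H; first by rewrite modn_small.
  have -> : k.+1 = n by lia. by rewrite modnn.
rewrite !Hm //; rewrite /cadj; case: ifP; case: ifP; lia.
Qed.

Section Core.
Variable R : realDomainType.
Local Open Scope ring_scope.

Lemma exmax (P : nat -> Prop) (g : nat -> R) N : (exists k, (k < N)%N /\ P k) ->
  exists k, (k < N)%N /\ P k /\ forall j, (j < N)%N -> P j -> g j <= g k.
Proof.
elim: N => [[k [Hk _]]//|N IH Hex].
destruct (classic (exists k, (k < N)%N /\ P k)) as [H|H].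
- have [k [Hk [Pk Hmax]]] := IH H.
  destruct (classic (P N)) as [PN|PN].
  + case: (lerP (g N) (g k)) => Hc.
    * exists k; split; [lia|split=> // j Hj Pj].
      have [Hj'|->] : (j < N)%N \/ j = N by lia. exact: Hmax. done.
    * exists N; split=> //; split=> // j Hj Pj.
      have [Hj'|->] : (j < N)%N \/ j = N by lia.
      exact: le_trans (Hmax _ Hj' Pj) (ltW Hc). done.
  + exists k; split; [lia|split=> // j Hj Pj].
    have [Hj'|Hj'] : (j < N)%N \/ j = N by lia. exact: Hmax. by subst.
- have [k [Hk Pk]] := Hex.
  have Hk' : k = N.
    have [//|Hkn] : k = N \/ (k < N)%N by lia. by exfalso; apply: H; exists k.
  subst k; exists N; split=> //; split=> // j Hj Pj.
  have [Hj'|->] : (j < N)%N \/ j = N by lia.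
  by exfalso; apply: H; exists j. done.
Qed.

Lemma exmax2 (g : nat -> nat -> R) n : (1 < n)%N ->
  exists i0 j0, [/\ (i0 < n)%N, (j0 < n)%N, i0 <> j0 &
     forall i j, (i < n)%N -> (j < n)%N -> i <> j -> g i j <= g i0 j0].
Proof.
move=> Hn.
have := @exmax (fun p => (p %/ n)%N <> (p %% n)%N) (fun p => g ((p %/ n)%N) ((p %% n)%N)) (n * n)%N.
case.
  exists 1; split; [nia|]. rewrite divn_small // modn_small //; lia.
move=> p [Hp [Pp Hmax]].
exists ((p %/ n)%N), ((p %% n)%N); split=> //.
- rewrite ltn_divLR; lia.
- rewrite ltn_mod; lia.
- move=> i j Hi Hj Hij.
  have := Hmax (i * n + j)%N.
  have E1 : ((i * n + j) %/ n)%N = i.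
    rewrite divnMDl; last lia. rewrite divn_small //. lia.
  have E2 : ((i * n + j) %% n)%N = j by rewrite modnMDl modn_small.
  rewrite E1 E2; apply=> //; nia.
Qed.

Variable n : nat.
Hypothesis Hn : n = 5 \/ (7 <= n)%N.

Section NoLt.
Variables a b : nat -> nat -> R.
Hypothesis Hua : forall i j k, a i k <= a i j \/ a i k <= a j k.
Hypothesis Hsa : forall i j, a i j = a j i.
Hypothesis He : forall i j, (i < n)%N -> (j < n)%N -> i <> j -> (a i j = b i j <-> cadj n i j).
Variables (i0 j0 : nat) (M2 : R).
Hypotheses (Hi0 : (i0 < n)%N) (Hj0 : (j0 < n)%N) (Hij0 : i0 <> j0).
Hypothesis Hb : forall i j, (i < n)%N -> (j < n)%N -> i <> j -> b i j <= M2.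
Hypothesis Hlt : M2 < a i0 j0.

Lemma no_lt : False.
Proof.
have Hc : forall k, (k < n)%N -> k = 0 \/ a 0 k < a i0 j0.
  elim=> [|k IH] Hk; first by left.
  have Hak : a k k.+1 < a i0 j0.
    have -> : a k k.+1 = b k k.+1 by apply/He; [lia|lia|lia|exact: cadj_succ].
    apply: le_lt_trans _ Hlt; apply: Hb; lia.
  right; case: (IH ltac:(lia)) => [Hk0|H0]; first by rewrite Hk0 in Hak *.
  case: (Hua 0 k k.+1) => H; [exact: le_lt_trans H H0|exact: le_lt_trans H Hak].
have : a i0 j0 < a i0 j0; last by rewrite ltxx.
case: (posnP i0) => Hi.
  rewrite {1}Hi; case: (Hc j0 Hj0) => //; lia.
case: (posnP j0) => Hj.
  rewrite {1}Hj Hsa; case: (Hc i0 Hi0) => //; lia.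
case: (Hua i0 0 j0) => H; apply: le_lt_trans H _.
  rewrite Hsa; case: (Hc i0 Hi0) => //; lia.
case: (Hc j0 Hj0) => //; lia.
Qed.
End NoLt.


Lemma transM (c : nat -> nat -> R) (M : R) x y z :
  (forall i j k, c i k <= c i j \/ c i k <= c j k) -> c x y < M -> c y z < M -> c x z < M.
Proof. move=> H h1 h2; case: (H x y z) => h; [exact: le_lt_trans h h1|exact: le_lt_trans h h2]. Qed.

Lemma chr (M x y : R) : x <= M -> y <= M -> ~ (x < M /\ y < M) ->
  (x = y <-> (~ x < M /\ ~ y < M)).
Proof.
move=> hx hy hn; split.
- move=> E; subst y; split=> h; apply: hn; by split.
- move=> [h1 h2].
  have D : forall z, z <= M -> ~ z < M -> z = M.
    move=> z; rewrite le_eqVlt => /orP [/eqP -> //|h] h'; by exfalso.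
  by rewrite (D x) // (D y).
Qed.

Lemma nadj_or (r c : bool) : ~ (~ r /\ ~ c) -> r \/ c.
Proof. by case: r; case: c; tauto. Qed.

Section Main.
Variables a b : nat -> nat -> R.
Hypothesis Hua : forall i j k, a i k <= a i j \/ a i k <= a j k.
Hypothesis Hsa : forall i j, a i j = a j i.
Hypothesis Hub : forall i j k, b i k <= b i j \/ b i k <= b j k.
Hypothesis Hsb : forall i j, b i j = b j i.
Hypothesis He : forall i j, (i < n)%N -> (j < n)%N -> i <> j -> (a i j = b i j <-> cadj n i j).

Lemma core : False.
Proof.
have Hn1 : (1 < n)%N by lia.
have Hn5 : (5 <= n)%N by lia.
have [i0 [j0 [Hi0 Hj0 Hij0 Hma]]] := exmax2 a Hn1.
have [p0 [q0 [Hp0 Hq0 Hpq0 Hmb]]] := exmax2 b Hn1.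
have He' : forall i j, (i < n)%N -> (j < n)%N -> i <> j -> (b i j = a i j <-> cadj n i j).
  move=> i j Hi Hj Hij; rewrite -He //; split=> ->//.
have HM : b p0 q0 = a i0 j0.
  case: (ltgtP (b p0 q0) (a i0 j0)) => // H; exfalso.
  - exact: (@no_lt a b Hua Hsa He i0 j0 (b p0 q0) Hi0 Hj0 Hij0 Hmb H).
  - exact: (@no_lt b a Hub Hsb He' p0 q0 (a i0 j0) Hp0 Hq0 Hpq0 Hma H).
set M := a i0 j0 in HM Hma.
have Hcell : forall i j, (i < n)%N -> (j < n)%N -> i <> j -> ~ (a i j < M /\ b i j < M).
  move=> i j Hi Hj Hij [Hr Hc].
  pose K k := k = i \/ (a i k < M /\ b i k < M).
  have Hmod : forall w k, (w < n)%N -> (k < n)%N -> ~ K w -> K k ->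
      (cadj n w k <-> cadj n w i).
    move=> w k Hw Hk Hnw [->|[Hrk Hck]]; first done.
    have Hwi : w <> i by move=> E; apply: Hnw; left.
    have Hwk : w <> k by move=> E; apply: Hnw; right; rewrite E.
    have Hra : a w k < M <-> a w i < M.
      split=> h.
      - apply: (transM Hua h); by rewrite Hsa.
      - exact: (transM Hua h).
    have Hrb : b w k < M <-> b w i < M.
      split=> h.
      - apply: (transM Hub h); by rewrite Hsb.
      - exact: (transM Hub h).
    have Hnot : ~ (a w i < M /\ b w i < M).
      by move=> [h1 h2]; apply: Hnw; right; rewrite Hsa Hsb.
    have Hnot' : ~ (a w k < M /\ b w k < M) by tauto.
    have Hbk : b w k <= M by rewrite -HM; exact: Hmb.
    have Hbi : b w i <= M by rewrite -HM; exact: Hmb.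
    rewrite -He // -He // (chr (Hma _ _ Hw Hk Hwk) Hbk Hnot') (chr (Hma _ _ Hw Hi Hwi) Hbi Hnot).
    tauto.
  have [w [Hw Hnw]] : exists w, (w < n)%N /\ ~ K w.
    have Hn0 : ~ a i0 j0 < M by rewrite ltxx.
    destruct (classic (K i0)) as [K0|K0]; last by exists i0.
    destruct (classic (K j0)) as [K1|K1]; last by exists j0.
    exfalso; apply: Hn0.
    case: K0 => [E0|[h0 _]]; case: K1 => [E1|[h1 _]].
    - by exfalso; apply: Hij0; rewrite E0 E1.
    - by rewrite E0.
    - by rewrite E1 Hsa.
    - apply: (transM Hua _ h1); by rewrite Hsa.
  have [k [Hk Hnk]] : exists k, (k.+1 < n)%N /\ ~ (K k <-> K k.+1).
    apply: NNPP => H.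
    have Hall : forall k, (k < n)%N -> (K k <-> K 0).
      elim=> [|k IH] Hk; first done.
      rewrite -IH; last lia.
      destruct (classic (K k <-> K k.+1)) as [h|h]; first by rewrite h.
      by exfalso; apply: H; exists k.
    exact: Hnw (proj2 (Hall w Hw) (proj1 (Hall i Hi) (or_introl erefl))).
  have [w' [m [Hw' Hm Hnw' HKm Hadj]]] : exists w' m, [/\ (w' < n)%N, (m < n)%N, ~ K w', K m & cadj n w' m].
    destruct (classic (K k)) as [h|h].
    - exists k.+1, k; split=> //; [lia| |exact/cadj_sym/cadj_succ].
      by move=> h'; apply: Hnk.
    - exists k, k.+1; split=> //; [lia| |exact: cadj_succ].
      apply: NNPP => h'; apply: Hnk; tauto.
  have Hw'i : cadj n w' i by rewrite -(Hmod w' m).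
  have HKj : K j by right.
  have Hw'j : cadj n w' j by rewrite (Hmod w' j).
  have Hne1 : w' <> i by move=> E; apply: Hnw'; left.
  have Hne2 : w' <> j by move=> E; apply: Hnw'; rewrite E; exact: HKj.
  have Hn3 : (3 <= n)%N by lia.
  have [p [Hp [Hip Hpw]]] := @cyc_C0 n i w' Hn3 Hi.
  have Hpi : p <> i by move=> E; apply: (@cadj_irr n i); [lia| by rewrite -{2}E].
  destruct (classic (K p)) as [Kp|Kp].
  - have Hw'p : cadj n w' p by rewrite (Hmod w' p).
    case: (eqVneq p j) => [E|Hpj].
    + apply: (@cyc_C1 n w' i j) => //; by rewrite -E.
    + have Hpj' : p <> j by apply/eqP.
      apply: (@cyc_C3 n w' i j p) => //; move=> E; [apply: Hpj'|apply: Hpi]; by rewrite E.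
  - have Hpj : cadj n p j by rewrite (Hmod p j) //; exact: cadj_sym.
    apply: (@cyc_C2 n i j w' p) => //; try exact: cadj_sym.
    by move=> E; apply: Hpw.
have Hadj : forall i j, (i < n)%N -> (j < n)%N -> i <> j ->
    (cadj n i j <-> (~ a i j < M /\ ~ b i j < M)).
  move=> i j Hi Hj Hij.
  have Hbij : b i j <= M by rewrite -HM; exact: Hmb.
  by rewrite -He // (chr (Hma _ _ Hi Hj Hij) Hbij (Hcell _ _ Hi Hj Hij)).
have NA : forall i j, ((i < n)%N /\ (j < n)%N /\ i <> j /\ ~ cadj n i j) ->
    (a i j < M \/ b i j < M) /\ ~ (a i j < M /\ b i j < M).
  move=> i j [Hi [Hj [Hij Hc]]]; split; last exact: Hcell.
  apply: nadj_or; by rewrite -Hadj.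
have AD : forall i j, ((i < n)%N /\ (j < n)%N /\ i <> j /\ cadj n i j) ->
    ~ a i j < M /\ ~ b i j < M.
  move=> i j [Hi [Hj [Hij Hc]]]; by rewrite -Hadj.
have TA := transM (M:=M) Hua.
have TB := transM (M:=M) Hub.
case: Hn => [H5|H7].
- have N02 := NA 0 2 ltac:(clear -H5; rewrite /cadj; lia).
  have N24 := NA 2 4 ltac:(clear -H5; rewrite /cadj; lia).
  have N41 := NA 4 1 ltac:(clear -H5; rewrite /cadj; lia).
  have N13 := NA 1 3 ltac:(clear -H5; rewrite /cadj; lia).
  have N30 := NA 3 0 ltac:(clear -H5; rewrite /cadj; lia).
  have A04 := AD 0 4 ltac:(clear -H5; rewrite /cadj; lia).
  have A21 := AD 2 1 ltac:(clear -H5; rewrite /cadj; lia).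
  have A43 := AD 4 3 ltac:(clear -H5; rewrite /cadj; lia).
  have A10 := AD 1 0 ltac:(clear -H5; rewrite /cadj; lia).
  have A32 := AD 3 2 ltac:(clear -H5; rewrite /cadj; lia).
  case: N02 => [[r02|c02] X02].
  + have c24 : b 2 4 < M.
      case: N24 => [[h|h] _] //; exfalso; exact: (proj1 A04 (TA _ _ _ r02 h)).
    have r41 : a 4 1 < M.
      case: N41 => [[h|h] _] //; exfalso; exact: (proj2 A21 (TB _ _ _ c24 h)).
    have c13 : b 1 3 < M.
      case: N13 => [[h|h] _] //; exfalso; exact: (proj1 A43 (TA _ _ _ r41 h)).
    have r30 : a 3 0 < M.
      case: N30 => [[h|h] _] //; exfalso; exact: (proj2 A10 (TB _ _ _ c13 h)).
    exact: (proj1 A32 (TA _ _ _ r30 r02)).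
  + have c24 : a 2 4 < M.
      case: N24 => [[h|h] _] //; exfalso; exact: (proj2 A04 (TB _ _ _ c02 h)).
    have r41 : b 4 1 < M.
      case: N41 => [[h|h] _] //; exfalso; exact: (proj1 A21 (TA _ _ _ c24 h)).
    have c13 : a 1 3 < M.
      case: N13 => [[h|h] _] //; exfalso; exact: (proj2 A43 (TB _ _ _ r41 h)).
    have r30 : b 3 0 < M.
      case: N30 => [[h|h] _] //; exfalso; exact: (proj1 A10 (TA _ _ _ c13 h)).
    exact: (proj2 A32 (TB _ _ _ r30 c02)).
- have N02 := NA 0 2 ltac:(clear -H7; rewrite /cadj; lia).
  have N04 := NA 0 4 ltac:(clear -H7; rewrite /cadj; lia).
  have N05 := NA 0 5 ltac:(clear -H7; rewrite /cadj; lia).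
  have N24 := NA 2 4 ltac:(clear -H7; rewrite /cadj; lia).
  have N25 := NA 2 5 ltac:(clear -H7; rewrite /cadj; lia).
  have A45 := AD 4 5 ltac:(clear -H7; rewrite /cadj; lia).
  case: N02 => [[r02|c02] X02].
  + have r04 : a 0 4 < M.
      case: N04 => [[h|c04] X04] //; exfalso.
      case: N24 => [[r24|c24] _].
      * exact: X04 (conj (TA _ _ _ r02 r24) c04).
      * apply: X02; split => //; apply: (TB _ _ _ c04); by rewrite Hsb.
    have r05 : a 0 5 < M.
      case: N05 => [[h|c05] X05] //; exfalso.
      case: N25 => [[r25|c25] _].
      * exact: X05 (conj (TA _ _ _ r02 r25) c05).
      * apply: X02; split => //; apply: (TB _ _ _ c05); by rewrite Hsb.
    apply: (proj1 A45); apply: (TA _ _ _ _ r05); by rewrite Hsa.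
  + have r04 : b 0 4 < M.
      case: N04 => [[c04|h] X04] //; exfalso.
      case: N24 => [[r24|c24] _].
      * apply: X02; split => //; apply: (TA _ _ _ c04); by rewrite Hsa.
      * exact: X04 (conj c04 (TB _ _ _ c02 c24)).
    have r05 : b 0 5 < M.
      case: N05 => [[c05|h] X05] //; exfalso.
      case: N25 => [[r25|c25] _].
      * apply: X02; split => //; apply: (TA _ _ _ c05); by rewrite Hsa.
      * exact: X05 (conj c05 (TB _ _ _ c02 c25)).
    apply: (proj2 A45); apply: (TB _ _ _ _ r05); by rewrite Hsb.
Qed.
End Main.
End Core.

Unset Implicit Arguments.

Theorem proposition3 (R : realType) (VT VS : finType)
  (oT : VT) (parT : VT -> VT) (oS : VS) (parS : VS -> VS)
  (sigma : VT -> VS) (mu : VT -> VS + VS) (tauT : VT -> R) (tauS : VS -> R) :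
  relaxed_scenario oT parT oS parS sigma mu tauT tauS ->
  (forall l, (l = 5 \/ 7 <= l) ->
     ~ has_induced_cycle (is_leaf oT parT)
         (edt_edge oT parT oS parS sigma tauT tauS) l) /\
  (forall l, odd l -> 3 < l ->
     ~ has_induced_cycle (is_leaf oT parT)
         (edt_edge oT parT oS parS sigma tauT tauS) l).
Proof.
move=> [PT [PS [TT [TS _]]]].
case: PT => HpoT HallT _ _.
case: PS => HpoS HallS _ _.
have [LT HLT] := @fin_all_exists _ (fun _ : VT * VT => VT)
    (fun p z => is_lca parT p.1 p.2 z) (fun p => lca_ex HallT p.1 p.2).
have [LS HLS] := @fin_all_exists _ (fun _ : VS * VS => VS)
    (fun p z => is_lca parS p.1 p.2 z) (fun p => lca_ex HallS p.1 p.2).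
have H1 : forall l, (l = 5 \/ 7 <= l) ->
     ~ has_induced_cycle (is_leaf oT parT)
         (edt_edge oT parT oS parS sigma tauT tauS) l.
  move=> l Hl [f [Hinj [Hleaf Hcyc]]].
  destruct l as [|l']; first by case: Hl.
  pose g k := f (inord k).
  pose a i j := tauT (LT (g i, g j)).
  pose b i j := tauS (LS (sigma (g i), sigma (g j))).
  apply: (@core R l'.+1 Hl a b).
  - move=> i j k; rewrite /a.
    exact: (lca_ultra TT (HLT (g i, g j)) (HLT (g j, g k)) (HLT (g i, g k))).
  - move=> i j; rewrite /a; congr tauT.
    apply: (lca_uniq HpoT HallT (HLT (g i, g j))); apply: lca_sym; exact: (HLT (g j, g i)).
  - move=> i j k; rewrite /b.
    exact: (lca_ultra TS (HLS (sigma (g i), sigma (g j))) (HLS (sigma (g j), sigma (g k)))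
              (HLS (sigma (g i), sigma (g k)))).
  - move=> i j; rewrite /b; congr tauS.
    apply: (lca_uniq HpoS HallS (HLS (sigma (g i), sigma (g j)))); apply: lca_sym;
      exact: (HLS (sigma (g j), sigma (g i))).
  - move=> i j Hi Hj Hij.
    have Hne : inord i <> inord j :> 'I_l'.+1.
      move=> E; apply: Hij; have := congr1 (@nat_of_ord _) E; rewrite !inordK //.
    have := Hcyc _ _ Hne; rewrite /= !inordK // cadj_mod //; last by case: Hl => [->|]; lia.
    move=> <-; rewrite /edt_edge /a /b; split.
    + move=> E; split; first exact: Hleaf.
      split; first exact: Hleaf.
      split; first by move=> E'; apply: Hne; apply: Hinj.
      exists (LT (g i, g j)), (LS (sigma (g i), sigma (g j))); split; [exact: (HLT (g i, g j))|].
      split; [exact: (HLS (sigma (g i), sigma (g j)))|exact: E].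
    + move=> [_ [_ [_ [zT [zS [Hz1 [Hz2 Hz3]]]]]]].
      rewrite (lca_uniq HpoT HallT (HLT (g i, g j)) Hz1).
      by rewrite (lca_uniq HpoS HallS (HLS (sigma (g i), sigma (g j))) Hz2).
split=> //.
move=> l Hodd H3; apply: H1.
have : l <> 4 by move=> E; rewrite E in Hodd.
have : l <> 6 by move=> E; rewrite E in Hodd.
lia.
Qed.
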